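(* Let $d \ge 2$ and let $a_1, \dots, a_d > 0$ be arbitrary reals. Let \[ S = \left\{ x \in \mathbb{R}^d \,:\, x_1, \dots, x_d \ge 0,\ \frac{x_1}{a_1} + \cdots + \frac{x_d}{a_d} \le 1 \right\}, \] and for every $I \subseteq [d] = \{1, \dots, d\}$ let \[ C_I = \left\{ x \in \mathbb{R}^d \,:\, \sum_{i \in I} \frac{|x_i|}{a_i} \le 1,\ x_j = 0 \text{ for all } j \in [d] \setminus I \right\}. \] Then for every real $t > 0$, \[ \left| tS \cap \mathbb{Z}^d \right| = \frac{1}{2^d} \sum_{I \subseteq [d]} \left| tC_I \cap \mathbb{Z}^d \right|. \]
   Context: For a set $P \subseteq \mathbb{R}^d$ and $t>0$, $tP = \{tx : x \in P\}$, and $|\cdot|$ applied to a set denotes its cardinality. For $I = \emptyset$ the set $C_\emptyset$ is $\{0\}$. *)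

(* Defs.v *)
From HB Require Import structures.
From mathcomp Require Import all_boot all_order all_algebra.
From mathcomp Require Import finmap boolp classical_sets cardinality reals.
Set Implicit Arguments. Unset Strict Implicit. Unset Printing Implicit Defensive.
Import Order.TTheory GRing.Theory Num.Theory.
Local Open Scope ring_scope.
Local Open Scope classical_set_scope.
Local Open Scope fset_scope.

(* Points of R^d are row vectors 'rV[R]_d; coordinate i of x is x 0 i
   (coordinates indexed by 'I_d = {0,..,d-1} instead of {1,..,d}). *)

Definition simplexS (R : realType) (d : nat) (a : 'I_d -> R) : set 'rV[R]_d :=
  [set x | (forall i, 0 <= x 0 i) /\ \sum_(i < d) x 0 i / a i <= 1].

Definition crossC (R : realType) (d : nat) (a : 'I_d -> R) (I : {set 'I_d})
    : set 'rV[R]_d :=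
  [set x | \sum_(i in I) `|x 0 i| / a i <= 1 /\
           (forall j, j \notin I -> x 0 j = 0)].

Definition dilate (R : realType) (d : nat) (t : R) (P : set 'rV[R]_d)
    : set 'rV[R]_d := [set t *: x | x in P].

Definition Zlattice (R : realType) (d : nat) : set 'rV[R]_d :=
  [set x | forall i, x 0 i \is a Num.int].

(* |P cap Z^d| (the sets in question are finite). *)
Definition lattice_count (R : realType) (d : nat) (P : set 'rV[R]_d) : nat :=
  #|` fset_set (P `&` @Zlattice R d)%classic |.

(* Main.v *)
Require Import Defs.
From HB Require Import structures.
From mathcomp Require Import all_boot all_order all_algebra.
From mathcomp Require Import finmap boolp classical_sets cardinality reals.
From mathcomp Require Import lra ring.
Import Order.TTheory GRing.Theory Num.Theory.
Local Open Scope ring_scope.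

Section Enc.
Variables (R : realType) (d N : nat).

Definition vc (c : 'I_(N + N).+1) : R := (c : nat)%:R - N%:R.

Lemma vc_inj : injective vc.
Proof.
move=> c c' /addIr /eqP; rewrite eqr_nat => /eqP h; exact: val_inj.
Qed.

Lemma vc_rev c : vc (rev_ord c) = - vc c.
Proof.
rewrite /vc /= subSS natrB; last by rewrite -ltnS.
rewrite natrD; lra.
Qed.

Lemma vc_int c : vc c \is a Num.int.
Proof. by rewrite rpredB ?natr_int. Qed.

Lemma vc_abs c : vc (if 0 <= vc c then c else rev_ord c) = `|vc c|.
Proof.
case: ifP => h; first by rewrite ger0_norm.
by rewrite vc_rev ltr0_norm // ltNge h.
Qed.

Definition encT := {ffun 'I_d -> 'I_(N + N).+1}.
Definition enc (k : encT) : 'rV[R]_d := \row_i vc (k i).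

Lemma enc_inj : injective enc.
Proof.
move=> k k' h; apply/ffunP => i; apply: vc_inj.
by have := congr1 (fun x : 'rV[R]_d => x 0 i) h; rewrite !mxE.
Qed.

Lemma count_enc (P : set 'rV[R]_d) (Q : pred encT) :
  (forall x, P x -> forall i, x 0 i \is a Num.int /\ `|x 0 i| <= N%:R) ->
  (forall k, P (enc k) <-> Q k) ->
  #|` fset_set P| = #|[set k | Q k]|.
Proof.
move=> hb hQ.
pose S := [set k | Q k].
have -> : P = [set` [fset enc k | k in S]%fset]%classic.
  rewrite predeqE => x; split.
  - move=> Px.
    pose k : encT := [ffun i => inord (Num.truncn (x 0 i + N%:R))].
    have ek : enc k = x.
      apply/rowP => i; rewrite !mxE ffunE.
      have [hi hn] := hb x Px i.
      move: hn; rewrite ler_norml => /andP[h1 h2].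
      have hnat : x 0 i + N%:R \is a Num.nat.
        by rewrite natrEint rpredD ?natr_int //=; lra.
      move: hnat; rewrite natrEtruncn => /eqP ht.
      rewrite /vc inordK; first by rewrite ht; lra.
      rewrite ltnS truncn_le_nat -[(N + N).+1]addn1 !natrD; lra.
    apply/imfsetP; exists k => //.
    by rewrite inE; apply/hQ; rewrite ek.
  - by move/imfsetP => [k]; rewrite inE => /hQ ? ->.
rewrite set_fsetK card_imfset; last exact: enc_inj.
rewrite cardE; apply: perm_size; apply: uniq_perm.
- exact: enum_finmem_uniq.
- exact: enum_uniq.
- by move=> k; rewrite enum_finmemE.
Qed.

End Enc.

Lemma card_bij (T1 T2 : finType) (A : {set T1}) (B : {set T2})
  (f : T1 -> T2) (g : T2 -> T1) :
  {in A, forall x, f x \in B} -> {in B, forall y, g y \in A} ->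
  {in A, cancel f g} -> {in B, cancel g f} -> #|A| = #|B|.
Proof.
move=> fAB gBA fK gK; apply/eqP; rewrite eqn_leq; apply/andP; split.
- have sub : f @: A \subset B.
    by apply/fintype.subsetP => y /imsetP [x xA ->]; exact: fAB.
  have := subset_leq_card sub; rewrite card_in_imset //.
  by move=> x y xA yA e; rewrite -(fK x xA) -(fK y yA) e.
- have sub : g @: B \subset A.
    by apply/fintype.subsetP => y /imsetP [x xA ->]; exact: gBA.
  have := subset_leq_card sub; rewrite card_in_imset //.
  by move=> x y xA yA e; rewrite -(gK x xA) -(gK y yA) e.
Qed.

Section Comb.
Variables (R : realType) (d N : nat) (a : 'I_d -> R) (t : R).
Hypothesis ha : forall i, 0 < a i.

Local Notation vc := (@vc R N).
Local Notation T := (encT d N).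

Definition PS (k : T) : bool :=
  [forall i, 0 <= vc (k i)] && (\sum_i vc (k i) / a i <= t).
Definition PI (I : {set 'I_d}) (k : T) : bool :=
  (\sum_(i in I) `|vc (k i)| / a i <= t) &&
  [forall j, (j \notin I) ==> (vc (k j) == 0)].

Definition phi (p : T * {set 'I_d}) : {set 'I_d} * T :=
  ([set i | vc (p.1 i) != 0] :|: p.2,
   [ffun i => if i \in p.2 then p.1 i else rev_ord (p.1 i)]).
Definition psi (q : {set 'I_d} * T) : T * {set 'I_d} :=
  ([ffun i => if 0 <= vc (q.2 i) then q.2 i else rev_ord (q.2 i)],
   [set i | 0 < vc (q.2 i)] :|: (q.1 :&: [set i | vc (q.2 i) == 0])).

Lemma sum_sub (I : {set 'I_d}) (f : 'I_d -> R) : (forall i, 0 <= f i) ->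
  \sum_(i in I) f i <= \sum_i f i.
Proof.
move=> h; rewrite [X in _ <= X](bigID (mem I)) /= lerDl.
by apply: sumr_ge0 => i _.
Qed.

Lemma comb : (#|[set k | PS k]| * 2 ^ d)%N = \sum_(I : {set 'I_d}) #|[set k | PI I k]|.
Proof.
have -> : (#|[set k | PS k]| * 2 ^ d)%N =
    #|finset.setX [set k | PS k] (powerset [set: 'I_d])|.
  by rewrite cardsX card_powerset cardsT card_ord.
have -> : \sum_(I : {set 'I_d}) #|[set k | PI I k]| =
    #|[set q : {set 'I_d} * T | PI q.1 q.2]|.
  transitivity (\sum_(I : {set 'I_d}) \sum_(k : T) (if PI I k then 1 else 0))%N.
    apply: eq_bigr => I _; rewrite -sum1_card big_mkcond /=.
    by apply: eq_bigr => k _; rewrite inE.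
  rewrite pair_big /= -sum1_card [in RHS]big_mkcond /=.
  by apply: eq_bigr => q _; rewrite inE.
apply: (@card_bij _ _ _ _ phi psi).
- move=> [k E]; rewrite !inE /= => /andP[/andP[/forallP hk hs] _].
  rewrite /PI; apply/andP; split.
  + rewrite (eq_bigr (fun i => vc (k i) / a i)); last first.
      by move=> i _; rewrite ffunE; case: (i \in E); rewrite ?vc_rev ?normrN ger0_norm.
    apply: le_trans hs; apply: sum_sub => i; apply: divr_ge0 => //; exact: ltW.
  + apply/forallP => j; apply/implyP; rewrite !inE negb_or => /andP[hj hE].
    by rewrite ffunE (negbTE hE) vc_rev; move: hj; rewrite negbK => /eqP ->; rewrite oppr0.
- move=> [I k']; rewrite !inE /= => /andP[hs /forallP hz].
  rewrite finset.subsetT andbT /PS; apply/andP; split.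
  + by apply/forallP => i; rewrite ffunE vc_abs.
  + rewrite (eq_bigr (fun i => `|vc (k' i)| / a i)); last by move=> i _; rewrite ffunE vc_abs.
    rewrite (bigID (mem I)) /= [X in _ + X]big1 ?addr0 // => i hi.
    by have := hz i; rewrite hi /= => /eqP ->; rewrite normr0 mul0r.
- move=> [k E]; rewrite !inE /= => /andP[/andP[/forallP hk _] _].
  rewrite /psi /phi /=; congr (_, _).
  + apply/ffunP => i; rewrite !ffunE; apply: (@vc_inj R); rewrite vc_abs.
    by case: (i \in E); rewrite ?vc_rev ?normrN ger0_norm.
  + apply/setP => i; rewrite !inE !ffunE.
    have hki := hk i.
    case: (i \in E); rewrite ?vc_rev ?orbT ?orbF ?oppr_eq0 ?oppr_gt0 /=.
    * by rewrite lt0r hki andbT; case: eqP.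
    * by rewrite ltNge hki /=; case: eqP.
- move=> [I k']; rewrite !inE /= => /andP[_ /forallP hz].
  rewrite /psi /phi /=; congr (_, _).
  + apply/setP => i; rewrite !inE !ffunE vc_abs normr_eq0.
    case: (eqVneq (vc (k' i)) 0) => [->|hv] /=; first by rewrite ltxx /= andbT.
    by move: (hz i); case: (i \in I) => /=; rewrite ?(negbTE hv) ?orbT.
  + apply/ffunP => i; rewrite !ffunE; apply: (@vc_inj R); rewrite !inE.
    case: ifP => h; rewrite ?vc_rev vc_abs.
    * by apply: ger0_norm; case/orP: h => [/ltW|/andP[_ /eqP->]].
    * move/negbT: h; rewrite negb_or => /andP[]; rewrite -leNgt => hv _.
      by rewrite ler0_norm // opprK.
Qed.
End Comb.

Section Main.
Variables (R : realType) (d : nat) (a : 'I_d -> R) (t : R) (N : nat).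
Hypotheses (ha : forall i, 0 < a i) (ht : 0 < t).
Hypothesis hN : forall i, t * a i <= N%:R.

Lemma dilateE (P : set 'rV[R]_d) x : dilate t P x <-> P (t^-1 *: x).
Proof.
split.
- by move=> [y Py <-]; rewrite scalerA mulVf ?scale1r // gt_eqF.
- move=> h; exists (t^-1 *: x) => //.
  by rewrite scalerA divff ?scale1r // gt_eqF.
Qed.

Lemma simplex_iff x : dilate t (simplexS a) x <->
  (forall j, 0 <= x 0 j) /\ \sum_j x 0 j / a j <= t.
Proof.
have e1 j : (0 <= (t^-1 *: x) 0 j) = (0 <= x 0 j).
  by rewrite mxE pmulr_rge0 // invr_gt0.
have e2 : (\sum_j (t^-1 *: x) 0 j / a j <= 1) = (\sum_j x 0 j / a j <= t).
  rewrite (eq_bigr (fun j => t^-1 * (x 0 j / a j))); last first.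
    by move=> j _; rewrite mxE mulrA.
  by rewrite -mulr_sumr mulrC ler_pdivrMr // mul1r.
rewrite dilateE /simplexS /=; split=> [[h1 h2]|[h1 h2]]; split.
- by move=> j; rewrite -e1.
- by rewrite -e2.
- by move=> j; rewrite e1.
- by rewrite e2.
Qed.

Lemma cross_iff (I : {set 'I_d}) x : dilate t (crossC a I) x <->
  \sum_(j in I) `|x 0 j| / a j <= t /\ (forall j, j \notin I -> x 0 j = 0).
Proof.
have e1 j : ((t^-1 *: x) 0 j = 0) <-> (x 0 j = 0).
  rewrite mxE; split => [/eqP|->]; last by rewrite mulr0.
  by rewrite mulf_eq0 invr_eq0 gt_eqF //= => /eqP.
have e2 : (\sum_(j in I) `|(t^-1 *: x) 0 j| / a j <= 1) =
          (\sum_(j in I) `|x 0 j| / a j <= t).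
  rewrite (eq_bigr (fun j => t^-1 * (`|x 0 j| / a j))); last first.
    by move=> j _; rewrite mxE normrM gtr0_norm ?invr_gt0 // mulrA.
  by rewrite -mulr_sumr mulrC ler_pdivrMr // mul1r.
rewrite dilateE /crossC /=; split=> [[h1 h2]|[h1 h2]]; split.
- by rewrite -e2.
- by move=> j /h2 /e1.
- by rewrite e2.
- by move=> j /h2 /e1.
Qed.

Lemma term_le (I : {set 'I_d}) (f : 'I_d -> R) i : (forall j, 0 <= f j) ->
  i \in I -> f i <= \sum_(j in I) f j.
Proof.
by move=> h hi; rewrite (bigD1 i) //= lerDl; apply: sumr_ge0 => j _.
Qed.

Lemma bound_of (x : 'rV[R]_d) i : x 0 i / a i <= t -> x 0 i <= N%:R.
Proof. by rewrite ler_pdivrMr // => h; apply: le_trans h (hN i). Qed.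

Lemma LS : lattice_count (dilate t (simplexS a)) = #|[set k | @PS R d N a t k]|.
Proof.
rewrite /lattice_count; apply: count_enc.
- move=> x [/simplex_iff [h0 hs] hZ] i; split; first exact: hZ i.
  rewrite ger0_norm //; apply: bound_of; apply: le_trans hs.
  rewrite (bigD1 i) //= lerDl; apply: sumr_ge0 => j _; apply: divr_ge0 => //; exact: ltW.
- move=> k; have ee j : @enc R d N k 0 j = @vc R N (k j) by rewrite mxE.
  split.
  + move=> [/simplex_iff [h0 hs] _]; apply/andP; split.
    * by apply/forallP => i; rewrite -ee.
    * by rewrite (eq_bigr (fun j => @enc R d N k 0 j / a j)) // => j _; rewrite ee.
  + move=> /andP[/forallP h0 hs]; split.
    * apply/simplex_iff; split; first by move=> j; rewrite ee.
      by rewrite (eq_bigr (fun j => @vc R N (k j) / a j)) // => j _; rewrite ee.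
    * by move=> j; rewrite ee vc_int.
Qed.

Lemma LC I : lattice_count (dilate t (crossC a I)) = #|[set k | @PI R d N a t I k]|.
Proof.
rewrite /lattice_count; apply: count_enc.
- move=> x [/cross_iff [hs h0] hZ] i; split; first exact: hZ i.
  case: (boolP (i \in I)) => hi; last by rewrite h0 // normr0.
  have := @bound_of (\row_j `|x 0 j|) i; rewrite !mxE; apply.
  apply: le_trans hs.
  apply: (term_le I (fun j => `|x 0 j| / a j)) => // j.
  apply: divr_ge0 => //; exact: ltW.
- move=> k; have ee j : @enc R d N k 0 j = @vc R N (k j) by rewrite mxE.
  split.
  + move=> [/cross_iff [hs h0] _]; apply/andP; split.
    * by rewrite (eq_bigr (fun j => `|@enc R d N k 0 j| / a j)) // => j _; rewrite ee.
    * by apply/forallP => j; apply/implyP => /h0; rewrite ee => ->.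
  + move=> /andP[hs /forallP h0]; split.
    * apply/cross_iff; split.
      - by rewrite (eq_bigr (fun j => `|@vc R N (k j)| / a j)) // => j _; rewrite ee.
      - by move=> j hj; rewrite ee; apply/eqP; move: (h0 j); rewrite hj.
    * by move=> j; rewrite ee vc_int.
Qed.

End Main.

Theorem proposition1 (R : realType) (d : nat) (hd : (2 <= d)%N)
    (a : 'I_d -> R) (ha : forall i, 0 < a i) (t : R) (ht : 0 < t) :
  (lattice_count (dilate t (simplexS a)))%:R =
    (2 ^+ d)^-1 * \sum_(I : {set 'I_d}) (lattice_count (dilate t (crossC a I)))%:R
      :> R.
Proof.
pose N := (Num.truncn (t * \sum_i a i)).+1.
have hN : forall i, t * a i <= N%:R.
  move=> i; apply: le_trans (_ : t * \sum_i a i <= N%:R).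
  - apply: ler_wpM2l; first exact: ltW.
    by rewrite (bigD1 i) //= lerDl; apply: sumr_ge0 => j _; apply: ltW.
  - apply/ltW; rewrite -truncn_le_nat //.
rewrite (@LS R d a t N ha ht hN).
rewrite (eq_bigr (fun I => (#|[set k | @PI R d N a t I k]|)%:R)); last first.
  by move=> I _; rewrite (@LC R d a t N ha ht hN).
rewrite -natr_sum -(@comb R d N a t ha) natrM natrX mulrC mulfK //.
by rewrite expf_neq0 // pnatr_eq0.
Qed.
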